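(* Let $G=\langle(123456),(16)(25)(34)\rangle\le S_6$ (the dihedral group of order $12$ acting on the vertices of a hexagon) and $D=\{(4,2),(3^2)\}$. Then $Aut_0(T_{D;G})$ is the trivial group.
   Context: For a partition $\lambda=(\lambda_1\ge\dots\ge\lambda_k>0)$ of $6$, a tabloid of shape $\lambda$ is a sequence $A=(A_1,\dots,A_k)$ of pairwise disjoint subsets of $\{1,\dots,6\}$ with $|A_i|=\lambda_i$; $T_\lambda$ is their set. $S_6$ acts by $\zeta A=(\zeta(A_1),\dots,\zeta(A_k))$. Tabloids are partially ordered by $A\le B$ iff $A_1\cup\dots\cup A_i\subseteq B_1\cup\dots\cup B_i$ for all $i\ge1$ (missing rows empty). $T_{\lambda;G}$ is the set of $G$-orbits in $T_\lambda$ and $T_{D;G}=\bigcup_{\mu\in D}T_{\mu;G}$, ordered by $a\le b$ iff there are $A\in a$, $B\in b$ with $A\le B$. $Aut_0(T_{D;G})$ is the group of bijections $\alpha$ of $T_{D;G}$ with $\alpha(a)\le\alpha(b)\iff a\le b$ and $\alpha(T_{\mu;G})=T_{\mu;G}$ for every $\mu\in D$. *)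

(* Defs.v *)
From mathcomp Require Import all_boot all_fingroup.
Set Implicit Arguments.
Unset Strict Implicit.
Unset Printing Implicit Defensive.

(* The points 1..6 are represented by the ordinals 0..5 of 'I_6
   (ordinal i stands for the point i+1). *)
Definition pt := 'I_6.

(* Tabloids: a sequence (A_1,...,A_k) of subsets, encoded as a 6-indexed
   family of sets where missing rows (index >= k) are empty; row i+1 is A i.
   Since a partition of 6 has at most 6 parts this is a faithful encoding. *)
Definition tab := {ffun 'I_6 -> {set pt}}.

Definition is_tabloid (lam : seq nat) (A : tab) : bool :=
  [forall i : 'I_6, #|A i| == nth 0 lam i] &&
  [forall i : 'I_6, forall j : 'I_6, (i != j) ==> [disjoint A i & A j]].

Definition T (lam : seq nat) : {set tab} := [set A | is_tabloid lam A].

Definition rows_upto (A : tab) (i : nat) : {set pt} :=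
  \bigcup_(j : 'I_6 | j < i) A j.

Definition tab_le (A B : tab) : Prop :=
  forall i : nat, 1 <= i -> rows_upto A i \subset rows_upto B i.

Definition tact (z : {perm pt}) (A : tab) : tab := [ffun i => z @: A i].

(* the generators (123456) and (16)(25)(34) *)
Definition rot : {perm pt} := perm (@ordS_inj 6).
Definition refl : {perm pt} := perm (@rev_ord_inj 6).

Definition G : {group {perm pt}} := <<[set rot; refl]>>%G.

Definition orb (A : tab) : {set tab} := [set tact z A | z in G].

Definition TG (lam : seq nat) : {set {set tab}} := [set orb A | A in T lam].

Definition TDG (D : seq (seq nat)) : {set {set tab}} :=
  \bigcup_(mu <- D) TG mu.

Definition orb_le (a b : {set tab}) : Prop :=
  exists A, exists B, [/\ A \in a, B \in b & tab_le A B].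

Definition D0 : seq (seq nat) := [:: [:: 4; 2]; [:: 3; 3]].

Definition in_Aut0 (D : seq (seq nat)) (alpha : {set tab} -> {set tab}) : Prop :=
  [/\ {in TDG D, forall a, alpha a \in TDG D},
      {in TDG D &, injective alpha},
      {in TDG D, forall b, exists2 a, a \in TDG D & alpha a = b},
      {in TDG D &, forall a b, orb_le (alpha a) (alpha b) <-> orb_le a b}
    & forall mu, mu \in D -> alpha @: TG mu = TG mu].

(* Main.v *)
Require Import Defs.
From mathcomp Require Import all_boot all_fingroup.
From mathcomp Require Import zify.
Set Implicit Arguments.
Unset Strict Implicit.
Unset Printing Implicit Defensive.

Definition fn (a : nat) (s : bool) (i : nat) : nat :=
  if s then (a + 6 - i) %% 6 else (a + i) %% 6.

Definition fm (x : {perm pt}) a s := forall i : pt, val (x i) = fn a s (val i).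

Lemma fn_lt a s i : fn a s i < 6.
Proof. by rewrite /fn; case: s; rewrite ltn_pmod. Qed.

Lemma comp_ok_b : all (fun a => all (fun b => all (fun i =>
   [&& fn b false (fn a false i) == fn (fn b false (fn a false 0)) false i,
       fn b true (fn a false i) == fn (fn b true (fn a false 0)) true i,
       fn b false (fn a true i) == fn (fn b false (fn a true 0)) true i &
       fn b true (fn a true i) == fn (fn b true (fn a true 0)) false i])
   (iota 0 6)) (iota 0 6)) (iota 0 6).
Proof. by []. Qed.

Lemma comp_ok a b i s t : a < 6 -> b < 6 -> i < 6 ->
  fn b t (fn a s i) = fn (fn b t (fn a s 0)) (s (+) t) i.
Proof.
move=> ha hb hi; have := comp_ok_b.
move/allP/(_ a); rewrite mem_iota ha => /(_ isT).
move/allP/(_ b); rewrite mem_iota hb => /(_ isT).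
move/allP/(_ i); rewrite mem_iota hi => /(_ isT).
by case: s; case: t => /and4P[/eqP e1 /eqP e2 /eqP e3 /eqP e4].
Qed.

Definition H : {set {perm pt}} :=
  [set x : {perm pt} | [exists a : 'I_6, exists s : bool, [forall i : pt, val (x i) == fn a s (val i)]]].

Lemma inH x : x \in H <-> exists a s, a < 6 /\ fm x a s.
Proof.
rewrite inE; split.
  case/existsP => a /existsP [s /forallP h]; exists a, s; split => // i.
  by apply/eqP.
move=> [a [s [ha h]]]; apply/existsP; exists (Ordinal ha); apply/existsP; exists s.
by apply/forallP => i; rewrite h.
Qed.

Lemma H_group : group_set H.
Proof.
apply/group_setP; split.
  apply/inH; exists 0, false; split => // i.
  by rewrite /fn add0n modn_small ?(@perm1 pt) //; exact: ltn_ord.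
move=> x y /inH [a [s [ha hx]]] /inH [b [t [hb hy]]].
apply/inH; exists (fn b t (fn a s 0)), (s (+) t); split; first exact: fn_lt.
move=> i; rewrite permM hy hx comp_ok // ?ltn_ord //.
Qed.

Definition Hg := Group H_group.

Lemma rot_fm : fm Defs.rot 1 false.
Proof. by move=> i; rewrite /Defs.rot permE /fn /=. Qed.

Lemma refl_fm : fm refl 5 true.
Proof.
move=> i; rewrite /refl permE /fn /=.
by case: i => [[|[|[|[|[|[|]]]]]] hi].
Qed.

Lemma memG x : x \in G -> exists a s, a < 6 /\ fm x a s.
Proof.
move=> hx; apply/inH.
have : G \subset Hg.
  rewrite /G; change (<<[set Defs.rot; refl]>> \subset Hg)%g; rewrite gen_subG; apply/subsetP => y; rewrite in_set2 => /orP[] /eqP ->.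
    by apply/inH; exists 1, false; split => //; exact: rot_fm.
  by apply/inH; exists 5, true; split => //; exact: refl_fm.
by move/subsetP; apply.
Qed.

Lemma fn0 a s : a < 6 -> fn a s 0 = a.
Proof. by move=> ha; rewrite /fn; case: s; rewrite ?subn0 ?addn0 ?modnDr modn_small. Qed.

Lemma Gstep x a s : x \in G -> a < 6 -> fm x a s -> fm (x * Defs.rot)%g ((a.+1) %% 6) s.
Proof.
move=> hx ha h i; rewrite permM rot_fm h comp_ok // ?fn_lt ?ltn_ord //.
by rewrite addbF fn0 // /fn add1n.
Qed.

Lemma rotG : Defs.rot \in G.
Proof. by apply: mem_gen; rewrite in_set2 eqxx. Qed.
Lemma reflG : refl \in G.
Proof. by apply: mem_gen; rewrite in_set2 eqxx orbT. Qed.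

Lemma Gmem a s : a < 6 -> exists2 x, x \in G & fm x a s.
Proof.
move=> ha.
have base : exists2 x, x \in G & fm x (if s then 5 else 0) s.
  case: s.
    by exists refl; [exact: reflG | exact: refl_fm].
  exists 1%g; first exact: group1.
  move=> i; rewrite /fn add0n modn_small ?(@perm1 pt) //; exact: ltn_ord.
have step : forall n, exists2 x, x \in G & fm x (((if s then 5 else 0) + n) %% 6) s.
  elim=> [|n [x hx hf]].
    by rewrite addn0 modn_small //; case: (s).
  exists (x * Defs.rot)%g; first by rewrite groupM // rotG.
  have := Gstep hx (ltn_pmod _ (isT : 0 < 6)) hf.
  have e : forall k, (k %% 6).+1 %% 6 = k.+1 %% 6 by move=> k; rewrite -[(k %% 6).+1]addn1 modnDml addn1.
  by rewrite e addnS.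
clear base; case: s step => step.
  have := step a.+1; rewrite addnS -addSn modnDl modn_small //.
have := step a; rewrite add0n modn_small //.
Qed.

Definition reps (j : nat) : seq nat :=
  nth [::] [:: [::0;1]; [::0;2]; [::0;3]; [::0;1;2]; [::0;1;3]; [::0;2;4]] j.
Definition qb j n := n \in reps j.
Definition Rset j : {set pt} := [set i : pt | qb j (val i)].

Definition bS (S : {set pt}) (n : nat) : bool := (inord n : pt) \in S.

Lemma card_count (S : {set pt}) : #|S| = count (bS S) (iota 0 6).
Proof.
rewrite -val_enum_ord count_map cardE /enum_mem size_filter.
rewrite (eq_filter (a2:=predT)) // filter_predT; apply: eq_count => i /=; by rewrite /bS inord_val.
Qed.

Lemma perm_imset (x : {perm pt}) (Q S : {set pt}) :
  (forall i, (i \in Q) = (x i \in S)) -> x @: Q = S.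
Proof.
move=> h; apply/setP => y; rewrite -[y](permKV x) mem_imset ?h //; exact: perm_inj.
Qed.

Lemma fm_mem x a s (S : {set pt}) i : fm x a s -> (x i \in S) = bS S (fn a s (val i)).
Proof.
move=> h; rewrite /bS; congr (_ \in S); apply: val_inj; rewrite /= inordK ?h //.
by rewrite -h ltn_ord.
Qed.

Lemma nth_bS S m : m < 6 -> nth false (map (bS S) (iota 0 6)) m = bS S m.
Proof. by move=> hm; rewrite (nth_map 0) ?size_iota // nth_iota. Qed.

Definition cls k js (b : seq bool) :=
  (count id b == k) ==> has (fun j => has (fun a => has (fun s =>
     all (fun i => qb j i == nth false b (fn a s i)) (iota 0 6)) [:: false; true]) (iota 0 6)) js.

Lemma dec_cls b0 b1 b2 b3 b4 b5 :
  cls 2 [::0;1;2] [:: b0;b1;b2;b3;b4;b5] && cls 3 [::3;4;5] [:: b0;b1;b2;b3;b4;b5].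
Proof. by case: b0; case: b1; case: b2; case: b3; case: b4; case: b5. Qed.

Lemma classify k js (S : {set pt}) : #|S| = k ->
  cls k js (map (bS S) (iota 0 6)) ->
  exists2 j, j \in js & exists2 x, x \in G & x @: Rset j = S.
Proof.
move=> hk; rewrite /cls count_map.
have -> : count (id \o bS S) (iota 0 6) = k by rewrite -hk card_count.
rewrite eqxx implyTb => /hasP [j hj] /hasP [a ha] /hasP [s _] /allP hall.
exists j => //.
have ha6 : a < 6 by move: ha; rewrite mem_iota.
have [x hx hf] := Gmem s ha6.
exists x => //; apply: perm_imset => i.
rewrite (fm_mem _ _ hf) inE.
have := hall (val i); rewrite mem_iota ltn_ord => /(_ isT) /eqP ->.
by rewrite nth_bS // fn_lt.
Qed.

Definition mk (S : {set pt}) : tab :=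
  [ffun i : 'I_6 => if val i == 0 then ~: S else if val i == 1 then S else set0].

Definition o1 : pt := @Ordinal 6 1 isT.

Lemma tact_mk z S : tact z (mk S) = mk (z @: S).
Proof.
apply/ffunP => i; rewrite !ffunE.
case: ifP => _.
  apply/setP => y; rewrite -[y](permKV z) in_setC !mem_imset ?in_setC //; exact: perm_inj.
case: ifP => _ //; exact: imset0.
Qed.

Lemma rows1 X : rows_upto (mk X) 1 = ~: X.
Proof.
apply/setP => y; apply/bigcupP/idP => [[j hj]|hy].
  by rewrite ffunE; move: hj; rewrite ltnS leqn0 => ->.
by exists ord0 => //; rewrite ffunE.
Qed.

Lemma rows2 X i : 2 <= i -> rows_upto (mk X) i = setT.
Proof.
move=> hi; apply/setP => y; rewrite inE; apply/bigcupP.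
case: (boolP (y \in X)) => hy.
  exists o1; first exact: leq_trans hi.
  by rewrite ffunE.
by exists ord0; [rewrite (leq_trans _ hi) | rewrite ffunE inE].
Qed.

Lemma tab_le_mk X Y : tab_le (mk X) (mk Y) <-> Y \subset X.
Proof.
split.
  by move/(_ 1 isT); rewrite !rows1 setCS.
move=> h [|[|i]] // _; first by rewrite !rows1 setCS.
by rewrite [rows_upto (mk Y) _]rows2 // subsetT.
Qed.

Lemma tact_comp w z A : tact w (tact z A) = tact (z * w)%g A.
Proof.
apply/ffunP => i; rewrite !ffunE -imset_comp; apply: eq_imset => x.
by rewrite permM.
Qed.

Lemma orb_tact z A : z \in G -> orb (tact z A) = orb A.
Proof.
move=> hz; apply/setP => B; apply/imsetP/imsetP => [[w hw ->]|[w hw ->]].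
  by exists (z * w)%g; [rewrite groupM | rewrite tact_comp].
by exists (z^-1 * w)%g; [rewrite groupM ?groupV | rewrite tact_comp mulKVg].
Qed.

Lemma orb_mem A : A \in orb A.
Proof.
apply/imsetP; exists 1%g; first exact: group1.
apply/ffunP => i; rewrite ffunE; apply/setP => y.
rewrite -[y in RHS](@perm1 pt) mem_imset //; exact: perm_inj.
Qed.

Lemma orb_le_mk X Y :
  orb_le (orb (mk X)) (orb (mk Y)) <-> exists2 k, k \in G & k @: Y \subset X.
Proof.
split.
  move=> [A [B [/imsetP [z hz ->] /imsetP [w hw ->]]]].
  rewrite !tact_mk => /tab_le_mk hsub.
  exists (w * z^-1)%g; first by rewrite groupM ?groupV.
  apply/subsetP => _ /imsetP [y hy ->]; rewrite permM.
  have : w y \in z @: X by apply: (subsetP hsub); apply: imset_f.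
  by rewrite -{1}[w y](permKV z) mem_imset //; exact: perm_inj.
move=> [k hk hsub]; exists (mk X), (tact k (mk Y)); split.
- exact: orb_mem.
- by apply/imsetP; exists k.
- by rewrite tact_mk; apply/tab_le_mk.
Qed.

Definition exb r q := has (fun a => has (fun s =>
  all (fun i => qb r i ==> qb q (fn a s i)) (iota 0 6)) [:: false; true]) (iota 0 6).

Lemma exG r q : (exists2 k, k \in G & k @: Rset r \subset Rset q) <-> exb r q.
Proof.
split.
  move=> [k hk hsub]; have [a [s [ha hf]]] := memG hk.
  apply/hasP; exists a; first by rewrite mem_iota.
  apply/hasP; exists s; first by case: (s).
  apply/allP => i; rewrite mem_iota add0n => /andP[_ hi]; apply/implyP => hr.
  have hri : (inord i : pt) \in Rset r by rewrite inE /= inordK.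
  by have := subsetP hsub _ (imset_f k hri); rewrite inE (hf (inord i)) /= inordK.
move=> /hasP [a ha] /hasP [s _] /allP hall.
have ha6 : a < 6 by move: ha; rewrite mem_iota.
have [x hx hf] := Gmem s ha6; exists x => //.
apply/subsetP => _ /imsetP [i hi ->]; rewrite inE hf.
move: hi; rewrite inE => hi.
by have := hall (val i); rewrite mem_iota ltn_ord => /(_ isT) /implyP; apply.
Qed.

Definition tbl q r := [|| q == 4, r == 1 | (q == 3) && (r == 0)].

Lemma exb_tbl_b : all (fun q => all (fun r => exb r q == tbl q r) [:: 0; 1; 2]) [:: 3; 4; 5].
Proof. by []. Qed.

Lemma exb_tbl q r : q \in [:: 3; 4; 5] -> r \in [:: 0; 1; 2] -> exb r q = tbl q r.
Proof.
move=> hq hr; have := exb_tbl_b.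
by move/allP/(_ q hq)/allP/(_ r hr)/eqP.
Qed.

Lemma rigid (s0 s1 s2 t3 t4 t5 : nat) :
  s0 \in [:: 0; 1; 2] -> s1 \in [:: 0; 1; 2] -> s2 \in [:: 0; 1; 2] ->
  t3 \in [:: 3; 4; 5] -> t4 \in [:: 3; 4; 5] -> t5 \in [:: 3; 4; 5] ->
  [&& tbl t3 s0 == tbl 3 0, tbl t3 s1 == tbl 3 1, tbl t3 s2 == tbl 3 2,
      tbl t4 s0 == tbl 4 0, tbl t4 s1 == tbl 4 1, tbl t4 s2 == tbl 4 2,
      tbl t5 s0 == tbl 5 0, tbl t5 s1 == tbl 5 1 & tbl t5 s2 == tbl 5 2] ->
  [/\ s0 = 0, s1 = 1, s2 = 2 & [/\ t3 = 3, t4 = 4 & t5 = 5]].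
Proof.
rewrite !inE.
by do 6 (case/or3P => /eqP ->).
Qed.

Lemma T_mk p q A : p + q = 6 -> A \in T [:: p; q] -> A = mk (A o1) /\ #|A o1| = q.
Proof.
move=> hpq; rewrite inE => /andP [/forallP hc /forallP hd].
have c1 : #|A o1| = q by move/eqP: (hc o1).
have c0 : #|A ord0| = p by move/eqP: (hc ord0).
split => //.
have h01 : A ord0 = ~: A o1.
  apply/eqP; rewrite eqEcard; apply/andP; split.
    rewrite -disjoints_subset.
    by move: (hd ord0) => /forallP /(_ o1) /implyP; apply.
  have := cardsC (A o1); rewrite card_ord c1 c0 => h.
  apply/leP; lia.
apply/ffunP => i; rewrite ffunE.
case: i => [[|[|n]] hn] /=.
- by rewrite -h01; congr (A _); apply: val_inj.
- by congr (A _); apply: val_inj.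
- apply: cards0_eq; move/eqP: (hc (Ordinal hn)); by rewrite /= nth_nil.
Qed.

Lemma mk_T p q (S : {set pt}) : p + q = 6 -> #|S| = q -> mk S \in T [:: p; q].
Proof.
move=> hpq hS; rewrite inE; apply/andP; split.
  apply/forallP => i; rewrite ffunE.
  case: i => [[|[|n]] hn] /=.
  - have := cardsC S; rewrite card_ord hS => h.
    have e : #|~: S| = p by apply/eqP; rewrite -(eqn_add2l q) h addnC hpq.
    by rewrite e.
  - by rewrite hS.
  - by rewrite cards0 nth_nil.
apply/forallP => i; apply/forallP => j; rewrite !ffunE -val_eqE.
case: i => [[|[|n]] hn]; case: j => [[|[|m]] hm] /=;
  rewrite ?disjoints_subset ?setCK ?setC0 ?subsetT ?sub0set ?subxx ?implybT //.
Qed.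

Definition o j := orb (mk (Rset j)).

Lemma card_Rset j : #|Rset j| = count (qb j) (iota 0 6).
Proof.
rewrite card_count; apply: eq_in_count => n; rewrite mem_iota => /andP[_ hn].
by rewrite /bS inE /= inordK.
Qed.

Lemma oT42 j : j \in [:: 0; 1; 2] -> o j \in TG [:: 4; 2].
Proof.
move=> hj; apply: imset_f; apply: mk_T => //; rewrite card_Rset.
by move: hj; rewrite !inE => /or3P [] /eqP ->.
Qed.

Lemma oT33 j : j \in [:: 3; 4; 5] -> o j \in TG [:: 3; 3].
Proof.
move=> hj; apply: imset_f; apply: mk_T => //; rewrite card_Rset.
by move: hj; rewrite !inE => /or3P [] /eqP ->.
Qed.

Lemma classT p q js A : p + q = 6 -> A \in T [:: p; q] ->
  cls q js (map (bS (A o1)) (iota 0 6)) -> exists2 j, j \in js & orb A = o j.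
Proof.
move=> hpq hA hc; have [eA cA] := T_mk hpq hA.
have [j hj [x hx ex]] := classify cA hc.
exists j => //; rewrite eA -ex -tact_mk orb_tact //.
Qed.

Lemma class42 a : a \in TG [:: 4; 2] -> exists2 j, j \in [:: 0; 1; 2] & a = o j.
Proof.
case/imsetP => A hA ->; apply: (classT (p := 4)) => //.
have := dec_cls (bS (A o1) 0) (bS (A o1) 1) (bS (A o1) 2) (bS (A o1) 3)
  (bS (A o1) 4) (bS (A o1) 5) => /andP [h _]; exact: h.
Qed.

Lemma class33 a : a \in TG [:: 3; 3] -> exists2 j, j \in [:: 3; 4; 5] & a = o j.
Proof.
case/imsetP => A hA ->; apply: (classT (p := 3)) => //.
have := dec_cls (bS (A o1) 0) (bS (A o1) 1) (bS (A o1) 2) (bS (A o1) 3)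
  (bS (A o1) 4) (bS (A o1) 5) => /andP [_ h]; exact: h.
Qed.

Lemma inTDG a : (a \in TDG D0) = (a \in TG [:: 4; 2]) || (a \in TG [:: 3; 3]).
Proof. by rewrite /TDG /D0 !big_cons big_nil setU0 in_setU. Qed.

Lemma key q r q' r' : q \in [:: 3; 4; 5] -> r \in [:: 0; 1; 2] ->
  q' \in [:: 3; 4; 5] -> r' \in [:: 0; 1; 2] ->
  (orb_le (o q') (o r') <-> orb_le (o q) (o r)) -> tbl q' r' == tbl q r.
Proof.
move=> hq hr hq' hr' h; apply/eqP; rewrite -!exb_tbl //; apply/idP/idP => H1.
  by apply/exG/orb_le_mk; apply/h; apply/orb_le_mk/exG.
by apply/exG/orb_le_mk; apply/h; apply/orb_le_mk/exG.
Qed.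

Theorem theorem10p2p1 :
  forall alpha : {set tab} -> {set tab},
    in_Aut0 D0 alpha -> {in TDG D0, forall a, alpha a = a}.
Proof.
move=> alpha [hin hinj hsurj hrel hmu].
have h42 : forall j, j \in [:: 0; 1; 2] ->
    exists2 j', j' \in [:: 0; 1; 2] & alpha (o j) = o j'.
  move=> j hj; apply: class42; rewrite -(hmu [:: 4; 2] isT); apply: imset_f.
  exact: oT42.
have h33 : forall j, j \in [:: 3; 4; 5] ->
    exists2 j', j' \in [:: 3; 4; 5] & alpha (o j) = o j'.
  move=> j hj; apply: class33; rewrite -(hmu [:: 3; 3] isT); apply: imset_f.
  exact: oT33.
have [s0 hs0 e0] := h42 0 isT.
have [s1 hs1 e1] := h42 1 isT.
have [s2 hs2 e2] := h42 2 isT.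
have [t3 ht3 e3] := h33 3 isT.
have [t4 ht4 e4] := h33 4 isT.
have [t5 ht5 e5] := h33 5 isT.
have R : forall q r, q \in [:: 3; 4; 5] -> r \in [:: 0; 1; 2] ->
    orb_le (alpha (o q)) (alpha (o r)) <-> orb_le (o q) (o r).
  move=> q r hq hr; apply: hrel; rewrite inTDG.
    by rewrite oT33 ?orbT.
  by rewrite oT42.
have K : forall q r q' r', q \in [:: 3; 4; 5] -> r \in [:: 0; 1; 2] ->
    q' \in [:: 3; 4; 5] -> r' \in [:: 0; 1; 2] ->
    alpha (o q) = o q' -> alpha (o r) = o r' -> tbl q' r' == tbl q r.
  move=> q r q' r' hq hr hq' hr' eq er; apply: key => //; rewrite -eq -er; exact: R.
have := rigid hs0 hs1 hs2 ht3 ht4 ht5.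
rewrite (K 3 0 t3 s0) // (K 3 1 t3 s1) // (K 3 2 t3 s2) //.
rewrite (K 4 0 t4 s0) // (K 4 1 t4 s1) // (K 4 2 t4 s2) //.
rewrite (K 5 0 t5 s0) // (K 5 1 t5 s1) // (K 5 2 t5 s2) //.
move=> /(_ isT) [es0 es1 es2 [et3 et4 et5]].
move=> a; rewrite inTDG => /orP [] => [/class42 | /class33] [j hj ->];
  move: hj; rewrite !inE => /or3P [] /eqP ->.
- by rewrite e0 es0.
- by rewrite e1 es1.
- by rewrite e2 es2.
- by rewrite e3 et3.
- by rewrite e4 et4.
- by rewrite e5 et5.
Qed.
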